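(* Let $\varepsilon\in(0,1/2)$ and $\Delta\ge1$. Let $H=(V,E_H)$ be a multigraph with spanning forest $F_H$ (a maximal acyclic subset of $E_H$), let $e=(a,b)\notin E_H$ be an edge whose endpoints lie in the same tree of $F_H$, and suppose the endpoints of the edges of $(E_H\cup\{e\})\setminus F_H$ are distinct vertices any two of which are at distance at least $\Delta$ in $F_H$. Let $X\in\{0,1\}^V$ be uniform, $Z\in\{0,1\}^{E_H\cup\{e\}}$ have independent Bernoulli$(\varepsilon)$ entries independent of $X$, and $Y(f)=X(u)+X(v)+Z(f)\pmod 2$ for $f=(u,v)$. Let $r=|E_H\setminus F_H|$ and $\rho=(1-2\varepsilon)^\Delta$, and suppose $(1+\rho)^r<2$. Then for every $y\in\{0,1\}^{E_H}$ with $\Pr[Y|_{E_H}=y]>0$, $$\left|\Pr[Y(e)=0\mid Y|_{E_H}=y]-\tfrac12\right|\le\frac{(1-2\varepsilon)^{\Delta-1}(1+\rho)^{r}}{2-(1+\rho)^{r}}.$$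
   Context: Distances in $F_H$ are shortest-path distances in the forest $F_H$. *)

(* Defs.v *)
From HB Require Import structures.
From mathcomp Require Import all_boot all_order all_algebra.
Set Implicit Arguments. Unset Strict Implicit. Unset Printing Implicit Defensive.
Import Order.TTheory GRing.Theory Num.Theory.

(* A multigraph on vertex type V with edge (index) type E and endpoint map
   ends : E -> V * V (loops and parallel edges allowed). *)

Fixpoint is_walk (V : eqType) (E : Type) (ends : E -> V * V) (S : E -> Prop)
    (u v : V) (s : seq E) : Prop :=
  match s with
  | [::] => u = v
  | f :: s' => S f /\ exists w, (ends f = (u, w) \/ ends f = (w, u)) /\
                                is_walk ends S w v s'
  end.

(* An edge set is acyclic: it contains no closed trail (a nonempty closed walk
   with pairwise distinct edges), equivalently no cycle. *)
Definition acyclic (V : eqType) (E : finType) (ends : E -> V * V)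
    (F : {set E}) : Prop :=
  forall (u : V) (s : seq E), s != [::] -> uniq s ->
    ~ is_walk ends (fun f => f \in F) u u s.

Definition spanning_forest (V : eqType) (E : finType) (ends : E -> V * V)
    (F : {set E}) : Prop :=
  acyclic ends F /\ forall f : E, f \notin F -> ~ acyclic ends (f |: F).

(* The shortest-path distance in F between u and v is at least D
   (in particular this holds when u and v lie in different trees). *)
Definition dist_ge (V : eqType) (E : finType) (ends : E -> V * V)
    (F : {set E}) (u v : V) (D : nat) : Prop :=
  forall s : seq E, is_walk ends (fun f => f \in F) u v s -> D <= size s.

(* Edge set E_H ∪ {e}: None stands for the new edge e = (a,b). *)
Definition ext_ends (V : Type) (E : Type) (ends : E -> V * V) (a b : V)
    (f : option E) : V * V :=
  match f with Some g => ends g | None => (a, b) end.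

Definition endpoint (V : Type) (p : V * V) (i : bool) : V :=
  if i then p.2 else p.1.

Definition Yval (V : finType) (E : finType) (ends : E -> V * V) (a b : V)
    (x : {ffun V -> bool}) (z : {ffun option E -> bool}) (f : option E) : bool :=
  let p := ext_ends ends a b f in (x p.1 (+) x p.2) (+) z f.

Local Open Scope ring_scope.

Definition weight (R : realFieldType) (V E : finType) (eps : R)
    (x : {ffun V -> bool}) (z : {ffun option E -> bool}) : R :=
  (2%:R ^+ #|V|)^-1 * \prod_(f : option E) (if z f then eps else 1 - eps).

Definition Prob (R : realFieldType) (V E : finType) (eps : R)
    (P : {ffun V -> bool} -> {ffun option E -> bool} -> bool) : R :=
  \sum_(x : {ffun V -> bool}) \sum_(z : {ffun option E -> bool})
     (if P x z then weight eps x z else 0).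

Definition PrYH (R : realFieldType) (V E : finType) (ends : E -> V * V) (a b : V)
    (eps : R) (y : {ffun E -> bool}) : R :=
  Prob eps (fun x z => [forall f : E, Yval ends a b x z (Some f) == y f]).

Definition PrYe0_YH (R : realFieldType) (V E : finType) (ends : E -> V * V)
    (a b : V) (eps : R) (y : {ffun E -> bool}) : R :=
  Prob eps (fun x z => (Yval ends a b x z None == false) &&
                       [forall f : E, Yval ends a b x z (Some f) == y f]).

(* Main.v *)
Require Import Defs.
From HB Require Import structures.
From mathcomp Require Import all_boot all_order all_algebra.
Import Order.TTheory GRing.Theory Num.Theory.
Local Open Scope ring_scope.
From mathcomp Require Import zify ring lra.
Set Implicit Arguments. Unset Strict Implicit. Unset Printing Implicit Defensive.
Local Close Scope ring_scope.

Section Walks.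
Variables (V : eqType) (E : Type) (ends : E -> V * V).

Definition joins (f : E) (p q : V) := ends f = (p, q) \/ ends f = (q, p).

Lemma walk_cat (P : E -> Prop) u v s1 s2 :
  is_walk ends P u v (s1 ++ s2) <->
  exists w, is_walk ends P u w s1 /\ is_walk ends P w v s2.
Proof.
elim: s1 u => [|f s1 IH] u /=.
  by split; [move=> h; exists u | case=> w [-> h]].
split.
  case=> Pf [w [hw]] /IH [w' [h1 h2]].
  by exists w'; split=> //; split=> //; exists w.
case=> w' [[Pf [w [hw h1]]] h2]; split=> //; exists w; split=> //.
by apply/IH; exists w'.
Qed.

Lemma walk_rcons (P : E -> Prop) u v w s f :
  is_walk ends P u v s -> P f -> joins f v w -> is_walk ends P u w (rcons s f).
Proof.
move=> hs Pf hj; rewrite -cats1; apply/walk_cat; exists v; split=> //=.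
split=> //; exists w; split=> //.
Qed.

Lemma walk_rev (P : E -> Prop) u v s :
  is_walk ends P u v s -> is_walk ends P v u (rev s).
Proof.
elim: s u => [|f s IH] u /=; first by move=> ->.
case=> Pf [w [hw hs]]; rewrite rev_cons.
apply: walk_rcons (IH _ hs) Pf _.
by rewrite /joins; case: hw; [right|left].
Qed.

Lemma walk_mono (P Q : E -> Prop) u v s :
  (forall f, P f -> Q f) -> is_walk ends P u v s -> is_walk ends Q u v s.
Proof.
move=> PQ; elim: s u => [|f s IH] u //= [Pf [w [hw hs]]].
by split; [apply: PQ | exists w; split=> //; apply: IH].
Qed.

End Walks.

Section Deg.
Variables (V : eqType) (E : Type) (ends : E -> V * V).

Definition inc (f : E) (v : V) : nat := ((ends f).1 == v) + ((ends f).2 == v).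
Definition degs (s : seq E) (v : V) : nat := \sum_(f <- s) inc f v.

Lemma inc_joins f p q x : joins ends f p q -> inc f x = (p == x) + (q == x).
Proof. by rewrite /inc; case=> ->; rewrite //= addnC. Qed.

Lemma walk_parity (P : E -> Prop) u v s x :
  is_walk ends P u v s -> ~~ odd (degs s x + (u == x) + (v == x)).
Proof.
elim: s u => [|f s IH] u /=.
  by move=> ->; rewrite /degs big_nil add0n addnn odd_double.
case=> _ [w [hw hs]]; have := IH _ hs; rewrite /degs big_cons (inc_joins x hw).
set A := \sum_(j <- s) inc j x => h.
have -> : (u == x) + (w == x) + A + (u == x) + (v == x) = (u == x).*2 + (A + (w == x) + (v == x)) by rewrite -addnn; lia.
by rewrite oddD odd_double.
Qed.

End Deg.

Lemma walk_in (V : eqType) (E : eqType) (ends : E -> V * V) (P : E -> Prop) u v s f :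
  is_walk ends P u v s -> f \in s -> P f.
Proof.
elim: s u => [|g s IH] u //= [Pg [w [_ hs]]].
by rewrite inE => /orP [/eqP -> //| fs]; apply: IH hs fs.
Qed.

Lemma inc_pos_joins (V : eqType) (E : Type) (ends : E -> V * V) f v :
  0 < inc ends f v -> exists q, joins ends f v q.
Proof.
rewrite /inc /joins; case: (ends f) => p1 p2 /=.
case: (eqVneq p1 v) => [->|_]; first by exists p2; left.
case: (eqVneq p2 v) => [->|//]; by exists p1; right.
Qed.

Section Trail.
Variables (V : eqType) (E : finType) (ends : E -> V * V) (F : {set E}).
Hypothesis hacyc : acyclic ends F.

Definition deg (D : {set E}) (v : V) : nat := \sum_(f in D) inc ends f v.

Lemma trail_odd (D : {set E}) w : D \subset F -> 0 < deg D w ->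
  exists s v, [/\ uniq s, is_walk ends (fun f => f \in D) w v s, v != w & odd (deg D v)].
Proof.
move=> DF hw.
suff H : forall k s v, #|E| - size s < k -> uniq s ->
    is_walk ends (fun f => f \in D) w v s ->
    exists s v, [/\ uniq s, is_walk ends (fun f => f \in D) w v s, v != w & odd (deg D v)].
  by apply: (H #|E|.+1 [::] w); rewrite ?subn0.
elim=> [|k IH] s v // hk us hs.
case: (pickP [pred f | (f \in D) && (f \notin s) && (0 < inc ends f v)]) => [f|none].
  move=> /= /andP [/andP [fD fs] hi]; have [q hq] := inc_pos_joins hi.
  have us' : uniq (rcons s f) by rewrite rcons_uniq fs us.
  have hsz : size (rcons s f) <= #|E|.
    by rewrite -(card_uniqP us'); apply: max_card.
  apply: (IH (rcons s f) q) => //; last exact: walk_rcons hs fD hq.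
  move: hsz hk; rewrite size_rcons; lia.
have hdeg : deg D v = degs ends s v.
  rewrite /deg (bigID (fun f => f \in s)) /=.
  rewrite [X in _ + X]big1 ?addn0; last first.
    move=> f /andP [fD fs]; have := none f; rewrite /= fD fs /=.
    by rewrite lt0n => /negbFE/eqP.
  rewrite /degs big_uniq //; apply: eq_bigl => f.
  case fs: (f \in s); rewrite ?andbF ?andbT //.
  exact: (walk_in hs fs).
clear none; case: s hk us hs hdeg => [|f0 s0] hk us hs hdeg.
  by move: hs hw => /= ->; rewrite hdeg /degs big_nil.
exists (f0 :: s0), v; split=> //.
  apply/eqP => vw; subst v; apply: (hacyc (u:=w) (s:=f0 :: s0)) => //.
  by apply: walk_mono hs => f fD; apply: (subsetP DF).
have := walk_parity v hs; rewrite hdeg eqxx.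
case: (eqVneq w v) => [wv|_]; last by rewrite addn0 addn1 /= => /negbNE.
subst v; exfalso; apply: (hacyc (u:=w) (s:=f0 :: s0)) => //.
by apply: walk_mono hs => f fD; apply: (subsetP DF).
Qed.

End Trail.

Section Even.
Variables (V : eqType) (E : finType) (ends : E -> V * V) (F : {set E}).
Hypothesis hacyc : acyclic ends F.

Lemma deg_setID (S B : {set E}) v : deg ends S v = deg ends (S :&: B) v + deg ends (S :\: B) v.
Proof. by rewrite /deg (big_setID B). Qed.

Lemma deg_ge f (D : {set E}) v : f \in D -> inc ends f v <= deg ends D v.
Proof. by move=> fD; rewrite /deg (bigD1 f) //= leq_addr. Qed.

Lemma even_empty (D : {set E}) : D \subset F -> (forall v, ~~ odd (deg ends D v)) -> D = set0.
Proof.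
move=> DF he; case: (set_0Vmem D) => [//|[f fD]].
have hw : 0 < deg ends D (ends f).1.
  by apply: leq_trans (deg_ge _ fD); rewrite /inc eqxx.
have [s [v [_ _ _ hodd]]] := trail_odd hacyc DF hw.
by move: (he v); rewrite hodd.
Qed.

Definition evenc (S : {set E}) (c : V -> nat) := forall v, ~~ odd (deg ends S v + c v).

Lemma even_inj (S1 S2 : {set E}) c : evenc S1 c -> evenc S2 c ->
  S1 :&: ~: F = S2 :&: ~: F -> S1 = S2.
Proof.
move=> h1 h2 hN.
pose D := (S1 :\: S2) :|: (S2 :\: S1).
have DF : D \subset F.
  apply/subsetP => f; rewrite !inE => /orP [] /andP [hn hs];
  apply/negPn/negP => fF.
    have : f \in S1 :&: ~: F by rewrite !inE hs fF.
    by rewrite hN !inE (negbTE hn).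
  have : f \in S2 :&: ~: F by rewrite !inE hs fF.
  by rewrite -hN !inE (negbTE hn).
have hD : forall v, ~~ odd (deg ends D v).
  move=> v; rewrite (deg_setID D S1).
  have -> : D :&: S1 = S1 :\: S2.
    by apply/setP => f; rewrite !inE; case: (f \in S1); case: (f \in S2).
  have -> : D :\: S1 = S2 :\: S1.
    by apply/setP => f; rewrite !inE; case: (f \in S1); case: (f \in S2).
  move: (h1 v) (h2 v); rewrite (deg_setID S1 S2) (deg_setID S2 S1) setIC !oddD.
  by case: (odd (deg ends (S1 :\: S2) v)); case: (odd (deg ends (S2 :\: S1) v));
     case: (odd (deg ends (S2 :&: S1) v)); case: (odd (c v)).
have D0 := even_empty DF hD.
apply/eqP; rewrite eqEsubset -!setD_eq0; apply/andP; split; apply/eqP;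
  apply/setP => f; move/setP: D0 => /(_ f); rewrite !inE;
  by case: (f \in S1); case: (f \in S2).
Qed.

End Even.

Section Near.
Variables (V : eqType) (E : eqType) (ends : E -> V * V).

Lemma prefix_near (P : E -> Prop) u v s k f :
  is_walk ends P u v s -> f \in take k s ->
  exists s' p q, [/\ is_walk ends P u p s', size s' < k & joins ends f p q].
Proof.
elim: s u k => [|g s IH] u k //=; case: k => [|k] //= [Pg [w [hw hs]]].
rewrite inE => /orP [/eqP ->|fs].
  by exists [::], u, w; split.
have [s' [p [q [h1 h2 h3]]]] := IH _ _ hs fs.
exists (g :: s'), p, q; split=> //=; split=> //; exists w; split=> //.
Qed.

Lemma joins_cases f p q p' q' : joins ends f p q -> joins ends f p' q' ->
  p' = p \/ p' = q.
Proof. by rewrite /joins; case=> ->; case=> [[-> _]|[_ ->]]; auto. Qed.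

End Near.

Section Count.
Variables (V : eqType) (EH : finType) (ends : EH -> V * V) (F : {set EH}) (a b : V) (Delta : nat).
Hypothesis hacyc : acyclic ends F.
Hypothesis hdist : forall (f g : option EH) (i j : bool),
      (if f is Some f' then f' \notin F else true) ->
      (if g is Some g' then g' \notin F else true) ->
      endpoint (ext_ends ends a b f) i = endpoint (ext_ends ends a b g) j ->
      f = g /\ i = j.
Hypothesis hdge : forall (f g : option EH) (i j : bool),
      (if f is Some f' then f' \notin F else true) ->
      (if g is Some g' then g' \notin F else true) ->
      (f, i) <> (g, j) ->
      dist_ge ends F (endpoint (ext_ends ends a b f) i)
                     (endpoint (ext_ends ends a b g) j) Delta.

Variables (S : {set EH}) (bb : bool).
Definition cE (v : V) : nat := if bb then (a == v) + (b == v) else 0.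
Hypothesis hev : evenc ends S cE.

Let ext := ext_ends ends a b.
Let T := S :&: ~: F.
Let T' : {set option EH} := if bb then None |: (Some @: T) else Some @: T.
Let Tm : {set option EH * bool} := setX T' setT.
Let vert (t : option EH * bool) := endpoint (ext t.1) t.2.
Let D := S :&: F.

Lemma memT' g : (g \in T') = (if g is Some f then f \in T else bb).
Proof.
have hN : None \notin Some @: T by apply/negP => /imsetP [].
rewrite /T'; case: bb; case: g => [f|] //=.
- by rewrite in_setU1 /= mem_imset //; exact: Some_inj.
- by rewrite setU11.
- by rewrite mem_imset //; exact: Some_inj.
- exact: negbTE.
Qed.

Lemma T'ok g : g \in T' -> (if g is Some f' then f' \notin F else true).
Proof. by rewrite memT'; case: g => // f; rewrite !inE => /andP []. Qed.

Lemma Tmok t : t \in Tm -> (if t.1 is Some f' then f' \notin F else true).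
Proof. by case: t => g i; rewrite in_setX => /andP [/T'ok]. Qed.

Lemma cardT' : #|T'| = #|T| + bb.
Proof.
have hN : None \notin Some @: T by apply/negP => /imsetP [].
rewrite /T'; case: bb.
  by rewrite cardsU1 hN card_imset ?addn1 //; exact: Some_inj.
by rewrite card_imset ?addn0 //; exact: Some_inj.
Qed.

Lemma cardTm : #|Tm| = (#|T| + bb) * 2.
Proof. by rewrite cardsX cardT' cardsT card_bool. Qed.

Lemma vert_inj t1 t2 : t1 \in Tm -> t2 \in Tm -> vert t1 = vert t2 -> t1 = t2.
Proof.
move=> /Tmok h1 /Tmok h2 /(hdist h1 h2) [].
by case: t1 {h1} => ? ?; case: t2 {h2} => ? ? /= -> ->.
Qed.

Lemma deg_key v : deg ends S v + cE v = deg ends D v + \sum_(t in Tm) (vert t == v).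
Proof.
rewrite (deg_setID ends S F) -/D -addnA; congr (_ + _).
have -> : \sum_(t in Tm) (vert t == v) = \sum_(g in T') inc ext g v.
  rewrite /Tm (eq_bigl (fun t => (t.1 \in T') && (t.2 \in [set: bool]))); last first.
    by case=> ? ?; rewrite in_setX.
  rewrite -(pair_big (fun g => g \in T') (fun i => i \in [set: bool]) (fun g i => (endpoint (ext g) i == v) : nat)) /=.
  apply: eq_bigr => g _; rewrite (eq_bigl xpredT); last by move=> i; rewrite inE.
  by rewrite big_bool /inc /= addnC.
rewrite setDE -/T /T' /cE.
have hS : \sum_(g in Some @: T) inc ext g v = deg ends T v.
  by rewrite big_imset /=; last by move=> ? ? _ _ []. 
case: bb; last by rewrite addn0 hS.
rewrite big_setU1 /=; last by apply/negP => /imsetP [].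
by rewrite hS addnC.
Qed.

Lemma odd_term t : t \in Tm -> odd (deg ends D (vert t)).
Proof.
move=> tT; have := hev (vert t); rewrite deg_key (bigD1 t) //= eqxx.
rewrite big1 ?addn0 ?addn1 /=; first by move/negbNE.
move=> t' /andP [t'T ne]; apply/eqP; rewrite eqb0; apply/eqP => h.
by move/eqP: ne; apply; apply: vert_inj.
Qed.

Lemma odd_is_term w : odd (deg ends D w) -> exists2 t, t \in Tm & vert t = w.
Proof.
move=> ho; case: (pickP [pred t | (t \in Tm) && (vert t == w)]) => [t /andP [h /eqP e]|none].
  by exists t.
have := hev w; rewrite deg_key big1 ?addn0 ?ho //.
by move=> t tT; have := none t; rewrite /= tT /= => ->.
Qed.


Let k := Delta./2.

Definition near (t : option EH * bool) (f : EH) :=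
  exists s p q, [/\ is_walk ends (fun g => g \in D) (vert t) p s, size s < k & joins ends f p q].

Lemma DF : D \subset F. Proof. exact: subsetIr. Qed.

Lemma near_far t1 t2 f : t1 \in Tm -> t2 \in Tm -> t1 != t2 -> f \in D ->
  near t1 f -> near t2 f -> False.
Proof.
move=> h1 h2 ne fD [s1 [p1 [q1 [w1 z1 j1]]]] [s2 [p2 [q2 [w2 z2 j2]]]].
have hk : k.*2 <= Delta by have := odd_double_half Delta; rewrite /k; lia.
have := hdge (Tmok h1) (Tmok h2).
case: t1 h1 ne w1 => g1 i1 h1 ne w1; case: t2 h2 ne w2 => g2 i2 h2 ne w2 /=.
move=> /(_ i1 i2 (fun e => (negP ne) (introT eqP e))) hd.
have wF : forall u v s, is_walk ends (fun g => g \in D) u v s ->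
    is_walk ends (fun f => f \in F) u v s.
  by move=> u v s; apply: walk_mono => g gD; apply: (subsetP DF).
move: (walk_rev w2) => w2'.
case: (joins_cases j1 j2) => e; subst p2.
  have w : is_walk ends (fun g => g \in D) (vert (g1, i1)) (vert (g2, i2)) (s1 ++ rev s2).
    by apply/walk_cat; exists p1.
  have := hd _ (wF _ _ _ w); rewrite size_cat size_rev; move: hk; rewrite -addnn; lia.
have w : is_walk ends (fun g => g \in D) (vert (g1, i1)) (vert (g2, i2)) (s1 ++ f :: rev s2).
  apply/walk_cat; exists p1; split=> //=; split=> //; exists q1; split=> //.
have := hd _ (wF _ _ _ w); rewrite size_cat /= size_rev; move: hk; rewrite -addnn; lia.
Qed.

Lemma count_terms (l : seq (option EH * bool)) : uniq l -> {subset l <= Tm} ->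
  exists E0 : {set EH}, [/\ E0 \subset D, #|E0| = k * size l &
     forall f, f \in E0 -> exists2 t, t \in l & near t f].
Proof.
elim: l => [|t l IH] /=.
  by move=> _ _; exists set0; split; rewrite ?sub0set ?cards0 ?muln0 // => f; rewrite inE.
move=> /andP [tl ul] sub.
have [E0 [E0D cE0 nE0]] := IH ul (fun x xl => sub x (mem_behead (s := t :: l) xl)).
have tT : t \in Tm by apply: sub; rewrite mem_head.
have hw := odd_term tT.
have hw' : 0 < deg ends D (vert t) by case: (deg ends D (vert t)) hw.
have [s [v [us ws vne vodd]]] := trail_odd hacyc DF hw'.
have [t' t'T vt'] := odd_is_term vodd.
have tne : t != t' by apply/eqP => e; move: vne; rewrite -vt' e eqxx.
have hsz : Delta <= size s.
  have hne : (t.1, t.2) <> (t'.1, t'.2) by rewrite -!surjective_pairing; apply/eqP.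
  apply: (hdge (Tmok tT) (Tmok t'T) hne).
  rewrite -vt' in ws; apply: walk_mono ws => f fD; exact: (subsetP DF).
have hkD : k <= Delta by have := odd_double_half Delta; rewrite -addnn /k; lia.
pose P := [set f in take k s].
have cP : #|P| = k.
  rewrite cardsE (card_uniqP _); last exact: take_uniq.
  rewrite size_take; case: ifP => // /negbT; rewrite -leqNgt => h.
  by apply/eqP; rewrite eqn_leq h /=; exact: leq_trans hkD hsz.
have PD : P \subset D.
  apply/subsetP => f; rewrite inE => /mem_take fs; exact: (walk_in ws fs).
have Pn : forall f, f \in P -> near t f.
  by move=> f; rewrite inE => hf; have [s' [p [q [h1 h2 h3]]]] := prefix_near ws hf; exists s', p, q.
have disj : E0 :&: P = set0.
  apply/setP => f; rewrite !inE; apply/negP => /andP [fE fP].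
  have [t0 t0l n0] := nE0 _ fE.
  have fP' : f \in P by rewrite inE.
  apply: (near_far (t1 := t0) (t2 := t)) (Pn _ fP') => //.
  - by apply: sub; rewrite inE t0l orbT.
  - by apply/eqP => e; move: tl; rewrite -e t0l.
  - exact: (subsetP PD).
exists (E0 :|: P); split.
- by rewrite subUset E0D PD.
- by rewrite cardsU disj cards0 subn0 cE0 cP mulnS addnC.
- move=> f; rewrite inE => /orP [/nE0 [t0 t0l n0]|fP].
    by exists t0; rewrite // inE t0l orbT.
  by exists t; [rewrite mem_head | exact: Pn].
Qed.

Lemma card_bound : Delta * (#|S :&: ~: F| + bb) <= #|S| + bb.
Proof.
have sub : {subset enum Tm <= Tm} by move=> x; rewrite mem_enum.
have [E0 [E0D cE0 _]] := count_terms (enum_uniq Tm) sub.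
have : k * #|Tm| <= #|D| by rewrite cardE -cE0; apply: subset_leq_card.
rewrite cardTm -(cardsID F S) -/D setDE -/T.
have := odd_double_half Delta; rewrite -addnn /k.
case: (odd Delta); rewrite /=; nia.
Qed.

End Count.

Local Open Scope ring_scope.

Section Gen.
Variable R : realFieldType.

Lemma sum_le_sub (I : finType) (P P' : pred I) (F : I -> R) :
  (forall i, P i -> P' i) -> (forall i, P' i -> 0 <= F i) ->
  \sum_(i | P i) F i <= \sum_(i | P' i) F i.
Proof.
move=> PP F0; rewrite [X in _ <= X](bigID P) /=.
rewrite (eq_bigl P); last by move=> i; case: (boolP (P i)) => h; rewrite ?andbT ?andbF ?PP.
rewrite lerDl; apply: sumr_ge0 => i /andP [h _]; exact: F0.
Qed.

Lemma prod1D (I : finType) (A : {set I}) (g : I -> R) :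
  \prod_(i in A) (1 + g i) = \sum_(S : {set I} | S \subset A) \prod_(i in S) g i.
Proof.
pose h i (c : bool) := if c then (if i \in A then g i else 0) else 1.
have -> : \prod_(i in A) (1 + g i) = \prod_(i : I) \sum_(c : bool) h i c.
  rewrite [RHS](bigID (fun i => i \in A)) /= [X in _ * X]big1 ?mulr1.
    by apply: eq_bigr => i iA; rewrite big_bool /h iA /= addrC.
  by move=> i /negbTE iA; rewrite big_bool /h iA /= add0r.
rewrite bigA_distr_bigA /=.
rewrite (reindex (fun S : {set I} => [ffun i => i \in S])); last first.
  exists (fun f : {ffun I -> bool} => [set i | f i]) => [S _|f _].
    by apply/setP => i; rewrite inE ffunE.
  by apply/ffunP => i; rewrite ffunE inE.
rewrite [RHS]big_mkcond /=; apply: eq_bigr => S _.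
under eq_bigr do rewrite ffunE.
rewrite -big_mkcond /=.
case: (boolP (S \subset A)) => sA.
  by apply: eq_bigr => i iS; rewrite /h (subsetP sA i iS).
case/subsetPn: sA => i iS niA.
by rewrite (bigD1 i) //= /h (negbTE niA) mul0r.
Qed.

Lemma prod_if (I : finType) (P : pred I) (F : I -> R) :
  (if [forall i, P i] then \prod_i F i else 0) = \prod_i (if P i then F i else 0).
Proof.
case: (boolP [forall i, P i]) => [/forallP h|/forallPn [i hi]].
  by apply: eq_bigr => i _; rewrite h.
by rewrite (bigD1 i) //= (negbTE hi) mul0r.
Qed.

End Gen.

Section W.
Variables (R : realFieldType) (V EH : finType) (ends : EH -> V * V) (a b : V).
Variable y : {ffun EH -> bool}.

Definition sgn (c : bool) : R := (-1) ^+ c.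
Let ext := ext_ends ends a b.
Definition cc (x : {ffun V -> bool}) (g : option EH) : bool :=
  x (ext g).1 (+) x (ext g).2.
Definition sf x f := sgn (cc x (Some f) (+) y f).
Definition se x := sgn (cc x None).
Definition term (S : {set EH}) (bb : bool) x := (if bb then se x else 1) * \prod_(f in S) sf x f.
Definition W (S : {set EH}) (bb : bool) := \sum_(x : {ffun V -> bool}) term S bb x.

Lemma sgn_norm c : `|sgn c| = 1.
Proof. by rewrite /sgn normrX normrN1 expr1n. Qed.

Lemma term_norm S bb x : `|term S bb x| = 1.
Proof.
rewrite /term normrM normr_prod (eq_bigr (fun _ => 1)); last by move=> f _; exact: sgn_norm.
by rewrite big1_eq mulr1; case: bb; rewrite ?sgn_norm ?normr1.
Qed.

Lemma card_x : #|{: {ffun V -> bool}}| = (2 ^ #|V|)%N.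
Proof. by rewrite card_ffun card_bool. Qed.

Lemma W_norm S bb : `|W S bb| <= 2%:R ^+ #|V|.
Proof.
apply: le_trans (ler_norm_sum _ _ _) _.
rewrite (eq_bigr (fun _ => 1)); last by move=> x _; exact: term_norm.
by rewrite sumr_const card_x natrX.
Qed.

Lemma W_empty : W set0 false = 2%:R ^+ #|V|.
Proof.
rewrite /W (eq_bigr (fun _ => 1)); last by move=> x _; rewrite /term big_set0 mulr1.
by rewrite sumr_const card_x natrX.
Qed.

Definition flip (v : V) (x : {ffun V -> bool}) : {ffun V -> bool} := [ffun u => x u (+) (u == v)].

Lemma flipK v : involutive (flip v).
Proof. by move=> x; apply/ffunP => u; rewrite !ffunE addbK. Qed.

Lemma sgn_flip v x g c :
  sgn (cc (flip v x) g (+) c) = sgn (cc x g (+) c) * (-1) ^+ (inc ext g v).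
Proof.
rewrite /cc /inc /sgn !ffunE !signr_addb exprD.
set p := (-1) ^+ ((ext g).1 == v); set q := (-1) ^+ ((ext g).2 == v).
ring.
Qed.

Lemma term_flip S bb v x :
  term S bb (flip v x) = (-1) ^+ (deg ends S v + cE a b bb v) * term S bb x.
Proof.
rewrite /term exprD.
have -> : \prod_(f in S) sf (flip v x) f = \prod_(f in S) sf x f * (-1) ^+ deg ends S v.
  rewrite /deg -prodrXr -big_split /=; apply: eq_bigr => f _.
  exact: sgn_flip.
case: bb; rewrite /cE /=; last by rewrite expr0; ring.
have : se (flip v x) = se x * (-1) ^+ ((a == v) + (b == v)).
  by have := sgn_flip v x None false; rewrite /se !addbF.
move=> ->; ring.
Qed.

Definition evb (S : {set EH}) (bb : bool) := [forall v, ~~ odd (deg ends S v + cE a b bb v)].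

Lemma W_zero S bb : ~~ evb S bb -> W S bb = 0.
Proof.
case/forallPn => v /negbNE ho.
have h : W S bb = - W S bb.
  rewrite {1}/W (reindex_inj (can_inj (flipK v))) /=.
  under eq_bigr do rewrite term_flip -signr_odd ho expr1 mulN1r.
  by rewrite sumrN.
lra.
Qed.

End W.

Lemma big_opt (R : Type) (idx : R) (op : Monoid.com_law idx) (T : finType) (G : option T -> R) :
  \big[op/idx]_(g : option T) G g = op (G None) (\big[op/idx]_(f : T) G (Some f)).
Proof.
rewrite (bigD1 None) //=; congr (op _ _).
rewrite (reindex_omap (@Some T) (fun g => g)) //=.
  by apply: eq_bigl => f; rewrite eqxx.
by case.
Qed.

Section Pr.
Variables (R : realFieldType) (V EH : finType) (ends : EH -> V * V) (a b : V).
Variables (y : {ffun EH -> bool}) (eps : R).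

Definition pe (c : bool) : R := if c then eps else 1 - eps.
Definition qf x f := pe (cc ends a b x (Some f) (+) y f).
Definition qe x := pe (cc ends a b x None).

Lemma sum_z (x : {ffun V -> bool}) (C : option EH -> bool -> bool) :
  \sum_(z : {ffun option EH -> bool}) (if [forall g, C g (z g)] then weight eps x z else 0)
  = (2%:R ^+ #|V|)^-1 * \prod_(g : option EH) \sum_(c : bool) (if C g c then pe c else 0).
Proof.
rewrite bigA_distr_bigA mulr_sumr; apply: eq_bigr => z _.
rewrite /weight -prod_if; case: ifP => _; rewrite ?mulr0 //.
Qed.

Lemma PrYH_eq : PrYH ends a b eps y = (2%:R ^+ #|V|)^-1 * \sum_x \prod_(f : EH) qf x f.
Proof.
rewrite /PrYH /Prob mulr_sumr; apply: eq_bigr => x _.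
pose C (g : option EH) (c : bool) := if g is Some f then (cc ends a b x g (+) c) == y f else true.
rewrite (eq_bigr (fun z : {ffun option EH -> bool} => if [forall g, C g (z g)] then weight eps x z else 0)); last first.
  move=> z _; congr (if _ then _ else _).
  apply/forallP/forallP => [h [f|] //|h f]; [exact: (h f)|exact: (h (Some f))].
rewrite sum_z big_opt /= big_bool /pe /=.
congr (_ * _); rewrite [X in X * _](_ : _ = 1) ?mul1r; last by ring.
apply: eq_bigr => f _; rewrite big_bool /qf /pe.
by case: (cc ends a b x (Some f)); case: (y f); rewrite /= ?addr0 ?add0r.
Qed.

Lemma PrYe0_eq : PrYe0_YH ends a b eps y =
  (2%:R ^+ #|V|)^-1 * \sum_x qe x * \prod_(f : EH) qf x f.
Proof.
rewrite /PrYe0_YH /Prob mulr_sumr; apply: eq_bigr => x _.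
pose C (g : option EH) (c : bool) := if g is Some f then (cc ends a b x g (+) c) == y f
   else (cc ends a b x None (+) c) == false.
rewrite (eq_bigr (fun z : {ffun option EH -> bool} => if [forall g, C g (z g)] then weight eps x z else 0)); last first.
  move=> z _; congr (if _ then _ else _).
  apply/andP/forallP => [[h1 /forallP h] [f|] //|h]; first exact: (h f).
  by split; [exact: (h None)| apply/forallP => f; exact: (h (Some f))].
rewrite sum_z big_opt /= big_bool /pe /qe /=.
congr (_ * (_ * _)).
  by case: (cc ends a b x None); rewrite /= ?addr0 ?add0r.
apply: eq_bigr => f _; rewrite big_bool /qf /pe.
by case: (cc ends a b x (Some f)); case: (y f); rewrite /= ?addr0 ?add0r.
Qed.

End Pr.

Section Bound.
Variables (R : realFieldType) (V EH : finType) (ends : EH -> V * V) (F : {set EH}) (a b : V) (Delta : nat).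
Hypothesis hacyc : acyclic ends F.
Hypothesis hdist : forall (f g : option EH) (i j : bool),
      (if f is Some f' then f' \notin F else true) ->
      (if g is Some g' then g' \notin F else true) ->
      endpoint (ext_ends ends a b f) i = endpoint (ext_ends ends a b g) j ->
      f = g /\ i = j.
Hypothesis hdge : forall (f g : option EH) (i j : bool),
      (if f is Some f' then f' \notin F else true) ->
      (if g is Some g' then g' \notin F else true) ->
      (f, i) <> (g, j) ->
      dist_ge ends F (endpoint (ext_ends ends a b f) i)
                     (endpoint (ext_ends ends a b g) j) Delta.
Hypothesis D1 : (1 <= Delta)%N.
Variable d : R.
Hypotheses (d0 : 0 <= d) (d1 : d <= 1).
Let rho := d ^+ Delta.

Lemma evbP S bb : evb ends a b S bb -> evenc ends S (cE a b bb).
Proof. by move/forallP. Qed.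

Lemma pointwise S bb : evb ends a b S bb ->
  d ^+ #|S| <= d ^+ (bb * (Delta.-1))%N * rho ^+ #|S :&: ~: F|.
Proof.
move=> /evbP he; have := card_bound hacyc hdist hdge he.
rewrite /rho -exprM -exprD => h; apply: ler_wiXn2l => //.
move: h; clear he; case: bb => /=; nia.
Qed.

Lemma sum_subsets : \sum_(T : {set EH} | T \subset ~: F) rho ^+ #|T| = (1 + rho) ^+ #|~: F|.
Proof.
rewrite (eq_bigr (fun T : {set EH} => \prod_(i in T) rho)); last by move=> T _; rewrite prodr_const.
by rewrite -prod1D prodr_const.
Qed.

Lemma rho0 : 0 <= rho. Proof. exact: exprn_ge0. Qed.

Lemma sum_bound bb (P Q : pred {set EH}) :
  (forall S, P S -> evb ends a b S bb) ->
  (forall S, P S -> Q (S :&: ~: F)) ->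
  \sum_(S | P S) d ^+ #|S| <= d ^+ (bb * (Delta.-1))%N * \sum_(T | Q T) rho ^+ #|T|.
Proof.
move=> PE PQ.
apply: le_trans (_ : \sum_(S | P S) d ^+ (bb * (Delta.-1))%N * rho ^+ #|S :&: ~: F| <= _).
  by apply: ler_sum => S PS; apply: pointwise; apply: PE.
rewrite -mulr_sumr ler_wpM2l ?exprn_ge0 //.
pose h (S : {set EH}) := S :&: ~: F.
have hinj : {in P &, injective h}.
  move=> S1 S2 h1 h2 e; apply: (even_inj hacyc (evbP (PE _ h1)) (evbP (PE _ h2)) e).
rewrite (eq_bigl (fun S => S \in P)) //.
rewrite -(big_imset (fun T : {set EH} => rho ^+ #|T|) hinj) /=.
apply: sum_le_sub => [T /imsetP [S PS ->]|T _]; first exact: PQ.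
by rewrite exprn_ge0 // /rho exprn_ge0.
Qed.

End Bound.

Section Expand.
Variables (R : realFieldType) (V EH : finType) (ends : EH -> V * V) (a b : V).
Variable y : {ffun EH -> bool}.
Variable d : R.

Definition Aof (x : {ffun V -> bool}) := \prod_(f : EH) (1 + d * sf R ends a b y x f).

Lemma Aof_exp x : Aof x = \sum_(S : {set EH}) d ^+ #|S| * \prod_(f in S) sf R ends a b y x f.
Proof.
rewrite /Aof (eq_bigl (fun f => f \in [set: EH])); last by move=> f; rewrite inE.
rewrite prod1D; apply: eq_big => [S|S _]; first by rewrite subsetT.
by rewrite prodrMl.
Qed.

Lemma Den_exp : \sum_x Aof x = \sum_(S : {set EH}) d ^+ #|S| * W R ends a b y S false.
Proof.
under eq_bigr do rewrite Aof_exp.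
rewrite exchange_big /=; apply: eq_bigr => S _.
rewrite /W mulr_sumr; apply: eq_bigr => x _; by rewrite /term mul1r.
Qed.

Lemma Num_exp : \sum_x se R ends a b x * Aof x = \sum_(S : {set EH}) d ^+ #|S| * W R ends a b y S true.
Proof.
under eq_bigr do rewrite Aof_exp mulr_sumr.
rewrite exchange_big /=; apply: eq_bigr => S _.
rewrite /W mulr_sumr; apply: eq_bigr => x _; rewrite /term; ring.
Qed.

End Expand.

Unset Implicit Arguments. Set Strict Implicit.

Theorem mainTheorem17 (R : realFieldType) (eps : R) (Delta : nat)
    (V EH : finType) (ends : EH -> V * V) (F : {set EH}) (a b : V)
    (y : {ffun EH -> bool}) :
  0 < eps -> eps < 1 / 2%:R -> (1 <= Delta)%N ->
  spanning_forest ends F ->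
  (exists s : seq EH, is_walk ends (fun f => f \in F) a b s) ->
  (forall (f g : option EH) (i j : bool),
      (if f is Some f' then f' \notin F else true) ->
      (if g is Some g' then g' \notin F else true) ->
      endpoint (ext_ends ends a b f) i = endpoint (ext_ends ends a b g) j ->
      f = g /\ i = j) ->
  (forall (f g : option EH) (i j : bool),
      (if f is Some f' then f' \notin F else true) ->
      (if g is Some g' then g' \notin F else true) ->
      (f, i) <> (g, j) ->
      dist_ge ends F (endpoint (ext_ends ends a b f) i)
                     (endpoint (ext_ends ends a b g) j) Delta) ->
  let r := #|~: F| in
  let rho := (1 - 2%:R * eps) ^+ Delta in
  (1 + rho) ^+ r < 2%:R ->
  0 < PrYH ends a b eps y ->
  `| PrYe0_YH ends a b eps y / PrYH ends a b eps y - 1 / 2%:R |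
    <= (1 - 2%:R * eps) ^+ (Delta - 1) * (1 + rho) ^+ r / (2%:R - (1 + rho) ^+ r).
Proof.
move=> eps0 epsh D1 [hacyc _] _ hdist hdge r rho hr hpos.
set d := 1 - 2%:R * eps.
have d0 : 0 < d by rewrite /d; lra.
have d1 : d <= 1 by rewrite /d; lra.
set n2 : R := 2%:R ^+ #|V|.
have n2p : 0 < n2 by rewrite /n2 exprn_gt0 // ltr0n.
set K : R := \prod_(f : EH) (2%:R^-1 : R).
have Kp : 0 < K by rewrite /K prodr_gt0 // => f _; rewrite invr_gt0 ltr0n.
set Den := \sum_x Aof ends a b y d x.
set Num := \sum_x se R ends a b x * Aof ends a b y d x.
have hq : forall x, \prod_(f : EH) qf ends a b y eps x f = K * Aof ends a b y d x.
  move=> x; rewrite /K /Aof -big_split /=; apply: eq_bigr => f _.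
  rewrite /qf /pe /sf /sgn /d; case: (cc ends a b x (Some f) (+) y f); rewrite ?expr1 ?expr0; by field.
have hqe : forall x, qe ends a b eps x = (1 + d * se R ends a b x) / 2%:R.
  move=> x; rewrite /qe /pe /se /sgn /d; case: (cc ends a b x None); rewrite ?expr1 ?expr0; by field.
have e1 : \sum_x \prod_(f : EH) qf ends a b y eps x f = K * Den.
  by under eq_bigr do rewrite hq; rewrite -mulr_sumr.
have e2 : \sum_x qe ends a b eps x * \prod_(f : EH) qf ends a b y eps x f
          = K / 2%:R * (Den + d * Num).
  under eq_bigr do rewrite hq hqe.
  rewrite (eq_bigr (fun x => K / 2%:R * Aof ends a b y d x + K / 2%:R * d * (se R ends a b x * Aof ends a b y d x))); last by move=> x _; ring.
  by rewrite big_split /= -!mulr_sumr -/Den -/Num; ring.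
set P := (1 + rho) ^+ r.
have ev0 : evb ends a b set0 false.
  by apply/forallP => v; rewrite /deg big_set0.
have hS : \sum_(T : {set EH} | (T \subset ~: F) && (T != set0)) rho ^+ #|T| = P - 1.
  have := sum_subsets (R := R) F Delta d.
  rewrite (bigD1 set0) ?sub0set //= cards0 expr0 -/rho -/r -/P => <-; lra.
have B1 : \sum_(S | (S != set0) && evb ends a b S false) d ^+ #|S| <= P - 1.
  rewrite -hS.
  have := @sum_bound R V EH ends F a b Delta hacyc hdist hdge D1 d (ltW d0) d1 false
     (fun S => (S != set0) && evb ends a b S false)
     (fun T => (T \subset ~: F) && (T != set0)).
  rewrite mul0n expr0 mul1r; apply.
    by move=> S /andP [].
  move=> S /andP [nz ev]; rewrite subsetIr /=; apply/eqP => e.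
  have e' : S :&: ~: F = set0 :&: ~: F by rewrite e set0I.
  by move: nz; rewrite (even_inj hacyc (evbP ev) (evbP ev0) e') eqxx.
have hlow : - n2 * \sum_(S | (S != set0) && evb ends a b S false) d ^+ #|S|
    <= \sum_(S | S != set0) d ^+ #|S| * W R ends a b y S false.
  rewrite big_mkcondr mulr_sumr; apply: ler_sum => S nz.
  case: (boolP (evb ends a b S false)) => ev.
    have := W_norm R ends a b y S false; rewrite ler_norml => /andP [h _].
    have := exprn_ge0 #|S| (ltW d0); rewrite -/n2 => hd.
    rewrite -/n2 in h; nra.
  by rewrite W_zero // !mulr0.
have hDen : n2 * (2%:R - P) <= Den.
  rewrite /Den Den_exp (bigD1 set0) //= cards0 expr0 mul1r W_empty -/n2.
  have := ler_wpM2l (ltW n2p) B1; lra.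
have hNum : `|Num| <= n2 * (d ^+ (Delta - 1) * P).
  rewrite /Num Num_exp.
  apply: le_trans (ler_norm_sum _ _ _) _.
  apply: le_trans (_ : \sum_(S : {set EH}) (if evb ends a b S true then n2 * d ^+ #|S| else 0) <= _).
    apply: ler_sum => S _; case: (boolP (evb ends a b S true)) => ev.
      rewrite normrM ger0_norm ?exprn_ge0 ?(ltW d0) //.
      have := W_norm R ends a b y S true; rewrite -/n2 => h.
      have := exprn_ge0 #|S| (ltW d0) => hd; nra.
    by rewrite W_zero // mulr0 normr0.
  rewrite -big_mkcond /= -mulr_sumr ler_wpM2l ?(ltW n2p) //.
  have := @sum_bound R V EH ends F a b Delta hacyc hdist hdge D1 d (ltW d0) d1 true
     (fun S => evb ends a b S true) (fun T => T \subset ~: F).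
  rewrite mul1n subn1 sum_subsets -/rho -/r -/P; apply => // S _; exact: subsetIr.
have Pp : 0 <= P by rewrite /P exprn_ge0 // /rho; apply: addr_ge0 => //; apply: exprn_ge0; exact: ltW.
have Denp : 0 < Den by apply: lt_le_trans hDen; apply: mulr_gt0 => //; rewrite /P; lra.
rewrite PrYH_eq PrYe0_eq e1 e2 -/n2.
have -> : n2^-1 * (K / 2%:R * (Den + d * Num)) / (n2^-1 * (K * Den)) - 1 / 2%:R
          = Num * (d / (2%:R * Den)).
  by field; rewrite ?(gt_eqF n2p) ?(gt_eqF Kp) ?(gt_eqF Denp).
set c := d / (2%:R * Den).
have c0 : 0 < c by rewrite /c divr_gt0 // mulr_gt0.
rewrite normrM (gtr0_norm c0).
set X := d ^+ (Delta - 1) * P.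
have X0 : 0 <= X by rewrite /X mulr_ge0 // exprn_ge0 // ltW.
have hc : n2 * (2%:R - P) * c <= 1.
  rewrite /c mulrA ler_pdivrMr ?mulr_gt0 // mul1r.
  have := ler_wpM2r (ltW d0) hDen; nra.
rewrite ler_pdivlMr; last by rewrite /P; lra.
have h1 : `|Num| * c * (2%:R - P) <= n2 * X * c * (2%:R - P).
  by rewrite ler_wpM2r ?ler_wpM2r ?(ltW c0) //; rewrite /P; lra.
apply: le_trans h1 _.
have -> : n2 * X * c * (2%:R - P) = X * (n2 * (2%:R - P) * c) by ring.
by rewrite -{2}(mulr1 X) ler_wpM2l.
Qed.
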